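(* Let $B$ be a complete Boolean algebra. Then there is a partition of unity $I\subseteq B$ such that $B\cong\prod_{b\in I} B\upharpoonright b$ and $B\upharpoonright b$ is homogeneous in height for every $b\in I$. Moreover, $\mathfrak{h}(B\upharpoonright a)\neq \mathfrak{h}(B\upharpoonright b)$ whenever $a\neq b$ are in $I$.
   Context: For a partial order $(P,\leq)$, the height $\mathfrak{h}(P)$ is the minimal cardinality of a family of open dense subsets of $P$ whose intersection is not dense in $P$; if $P$ is atomic (there is a set of minimal elements such that every element lies above one of them) one sets $\mathfrak{h}(P)=\infty$. For a Boolean algebra $B$, $\mathfrak{h}(B)$ is the height of $(B\setminus\{0\},\leq)$. For $b\in B$, $B\upharpoonright b=\{x\in B: x\leq b\}$ is the relative algebra, and $\downarrow p=\{q\in P:q\leq p\}$. An ordering $P$ is homogeneous in height if $\mathfrak{h}(\downarrow p)=\mathfrak{h}(P)$ for every $p\in P$. A partition of unity is a set of pairwise disjoint nonzero elements whose join is $1$. *)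

(* Defs.v *)
(* Boolean algebras = ctbDistrLatticeType (complemented
   distributive lattices with top and bottom). Subsets are Prop predicates. *)
From mathcomp Require Import all_boot all_order.

Set Implicit Arguments.
Unset Strict Implicit.
Unset Printing Implicit Defensive.

Import Order.Theory.
Local Open Scope order_scope.

Section PosetNotions.
Variables (d : Order.disp_t) (T : porderType d).

(* All partial orders considered are subsets P of T with the induced order. *)

Definition dense_in (P D : T -> Prop) : Prop :=
  forall p, P p -> exists2 q, D q & q <= p.

Definition open_dense_in (P D : T -> Prop) : Prop :=
  [/\ (forall x, D x -> P x),
      (forall p q, D p -> P q -> q <= p -> D q)
    & dense_in P D].

Definition bigcap_in (P : T -> Prop) (F : (T -> Prop) -> Prop) : T -> Prop :=
  fun x => P x /\ forall D, F D -> D x.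

Definition bad_family (P : T -> Prop) (F : (T -> Prop) -> Prop) : Prop :=
  (forall D, F D -> open_dense_in P D) /\ ~ dense_in P (bigcap_in P F).

Definition minimal_in (P : T -> Prop) (a : T) : Prop :=
  P a /\ forall q, P q -> q <= a -> q = a.

Definition atomic (P : T -> Prop) : Prop :=
  exists A : T -> Prop, (forall a, A a -> minimal_in P a) /\
    forall p, P p -> exists2 a, A a & a <= p.

Definition card_le (X Y : (T -> Prop) -> Prop) : Prop :=
  exists f : {x | X x} -> {y | Y y}, injective f.

Definition equipotent (X Y : (T -> Prop) -> Prop) : Prop :=
  exists f : {x | X x} -> {y | Y y}, bijective f.

(* F witnesses the height of P: a bad family of minimal cardinality. *)
Definition min_bad_family (P : T -> Prop) (F : (T -> Prop) -> Prop) : Prop :=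
  bad_family P F /\ forall G, bad_family P G -> card_le F G.

(* h(P) = h(Q), where h = infinity for atomic orders. *)
Definition same_height (P Q : T -> Prop) : Prop :=
  (atomic P /\ atomic Q) \/
  [/\ ~ atomic P, ~ atomic Q &
      exists F G, [/\ min_bad_family P F, min_bad_family Q G & equipotent F G]].

Definition downset_in (P : T -> Prop) (p : T) : T -> Prop :=
  fun q => P q /\ q <= p.

Definition homogeneous_in_height (P : T -> Prop) : Prop :=
  forall p, P p -> same_height (downset_in P p) P.

Definition is_sup (S : T -> Prop) (s : T) : Prop :=
  (forall x, S x -> x <= s) /\ forall u, (forall x, S x -> x <= u) -> s <= u.

End PosetNotions.

Section BooleanNotions.
Variables (d : Order.disp_t) (B : ctbDistrLatticeType d).

(* (B restricted to b) \ {0}, the ordering whose height is h(B|b). *)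
Definition nonzero_below (b : B) : B -> Prop :=
  fun x => x != \bot /\ x <= b.

Definition partition_of_unity (I : B -> Prop) : Prop :=
  [/\ (forall b, I b -> b != \bot),
      (forall a b, I a -> I b -> a <> b -> a `&` b = \bot)
    & is_sup I \top].

(* B is isomorphic to the product of the relative algebras B|b, b in I
   (product ordered pointwise; an order isomorphism of Boolean algebras is
   a Boolean algebra isomorphism). *)
Definition product_iso (I : B -> Prop) : Prop :=
  exists phi : B -> (forall i : {b : B | I b}, {x : B | x <= sval i}),
    bijective phi /\
    forall x y, x <= y <-> forall i, sval (phi x i) <= sval (phi y i).

End BooleanNotions.

Definition complete_BA (d : Order.disp_t) (B : ctbDistrLatticeType d) : Prop :=
  forall S : B -> Prop, exists s, is_sup S s.

(* Main.v *)
Require Import Defs.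
From mathcomp Require Import all_boot all_order.
From mathcomp Require Import boolp wochoice.
From Stdlib Require Import ClassicalEpsilon FunctionalExtensionality PropExtensionality Classical.

Set Implicit Arguments.
Unset Strict Implicit.
Unset Printing Implicit Defensive.
Import Order.Theory.
Local Open Scope order_scope.

Section CardPart.


Definition cle (U : Type) (X Y : U -> Prop) :=
  exists f : {x | X x} -> {y | Y y}, injective f.

Lemma cle_trans U (X Y Z : U -> Prop) : cle X Y -> cle Y Z -> cle X Z.
Proof. move=> [f fi] [g gi]; exists (g \o f); exact: inj_comp. Qed.

Lemma cle_refl U (X : U -> Prop) : cle X X.
Proof. by exists id. Qed.

Section WO.
Lemma wo_min (T : eqType) (R : rel T) : well_order R ->
  forall P : T -> Prop, (exists x, P x) -> exists z, P z /\ forall x, P x -> R z x.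
Proof.
move=> wo P [x Px].
have [z [[zA zlb] _]] := wo [pred y | `[< P y >]] (ex_intro _ x (introT (asboolP _) Px)).
exists z; split; first exact: (asboolP _ zA).
by move=> y Py; apply: zlb; apply/asboolP.
Qed.

Lemma wo_refl (T : eqType) (R : rel T) : well_order R -> forall x, R x x.
Proof.
move=> wo x.
have [z [zP zmin]] := wo_min wo (P := fun u => u = x) (ex_intro _ x erefl).
by subst z; apply: zmin.
Qed.

Lemma wo_anti (T : eqType) (R : rel T) : well_order R ->
  forall x y, R x y -> R y x -> x = y.
Proof.
move=> wo x y Rxy Ryx.
have xin : x \in [pred u | (u == x) || (u == y)] by rewrite inE eqxx.
have [z [[zA zlb] zu]] := wo [pred u | (u == x) || (u == y)] (ex_intro _ x xin).
have hx : z = x by apply: zu; split; [rewrite inE eqxx | move=> u; rewrite inE => /orP[/eqP->|/eqP->] //; exact: wo_refl].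
have hy : z = y by apply: zu; split; [rewrite inE eqxx orbT | move=> u; rewrite inE => /orP[/eqP->|/eqP->] //; exact: wo_refl].
by rewrite -hx -hy.
Qed.

Lemma wo_total (T : eqType) (R : rel T) : well_order R ->
  forall x y, R x y \/ R y x.
Proof.
move=> wo x y.
have [z [zP zmin]] := wo_min wo (P := fun u => u = x \/ u = y) (ex_intro _ x (or_introl erefl)).
by case: zP => e; subst z; [left; apply: zmin; right | right; apply: zmin; left].
Qed.


Lemma wo_trans (T : eqType) (R : rel T) : well_order R ->
  forall x y z, R x y -> R y z -> R x z.
Proof.
move=> wo x y z Rxy Ryz.
have [m [mP mmin]] := wo_min wo (P := fun u => u = x \/ u = y \/ u = z) (ex_intro _ x (or_introl erefl)).
case: mP => [e|[e|e]]; subst m.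
- by apply: mmin; right; right.
- have e : x = y by apply: (wo_anti wo Rxy); apply: mmin; left.
  by subst.
- have e : y = z by apply: (wo_anti wo Ryz); apply: mmin; right; left.
  by subst.
Qed.

Definition lt_of (T : Type) (R : rel T) x y := x <> y /\ R x y.

Lemma wo_wf (T : eqType) (R : rel T) : well_order R -> well_founded (lt_of R).
Proof.
move=> wo x; apply: NNPP => nacc.
have [z [nz zmin]] := wo_min wo (P := fun z => ~ Acc (lt_of R) z) (ex_intro _ x nacc).
apply: nz; constructor => y [yz Ryz]; apply: NNPP => ny.
by apply: yz; apply: (wo_anti wo Ryz (zmin _ ny)).
Qed.

Lemma lt_trans (T : eqType) (R : rel T) : well_order R ->
  forall x y z, lt_of R x y -> lt_of R y z -> lt_of R x z.
Proof.
move=> wo x y z [nxy Rxy] [nyz Ryz]; split; last exact: wo_trans Rxy Ryz.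
move=> exz; subst z; apply: nxy; exact: (wo_anti wo Rxy Ryz).
Qed.
End WO.

Definition least (T : Type) (R : rel T) (d : T) (P : T -> Prop) : T :=
  epsilon (inhabits d) (fun z => P z /\ forall x, P x -> R z x).

Lemma leastP (T : eqType) (R : rel T) d P : well_order R -> (exists x, P x) ->
  P (least R d P) /\ forall x, P x -> R (least R d P) x.
Proof.
move=> wo ex; rewrite /least.
exact: (epsilon_spec (inhabits d) (fun z => P z /\ forall x, P x -> R z x) (wo_min wo ex)).
Qed.

Section Rank.
Definition rankF (U : Type) (RU : rel U) (RV : rel (U -> Prop)) (S : U -> Prop)
  (x : U) (rec : forall y, lt_of RU y x -> (U -> Prop)) : U -> Prop :=
  least RV (fun _ => False) (fun v => ~ exists y (h : lt_of RU y x), S y /\ v = rec y h).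

Definition rank (U : Type) (RU : rel U) (wU : well_founded (lt_of RU))
   (RV : rel (U -> Prop)) (S : U -> Prop) : U -> (U -> Prop) :=
  Fix wU (fun _ => U -> Prop) (rankF RV S).

Lemma rank_eq (U : Type) (RU : rel U) (wU : well_founded (lt_of RU))
   (RV : rel (U -> Prop)) (S : U -> Prop) x :
  rank wU RV S x = least RV (fun _ => False)
     (fun v => ~ exists y, lt_of RU y x /\ S y /\ v = rank wU RV S y).
Proof.
rewrite /rank Fix_eq.
  rewrite /rankF; congr least; apply: functional_extensionality => v.
  apply: propositional_extensionality; split.
    by move=> H [y [h [Sy e]]]; apply: H; exists y, h.
  by move=> H [y [h [Sy e]]]; apply: H; exists y.
move=> x0 f g fg; rewrite /rankF; congr least.
have -> // : f = g.
apply: functional_extensionality_dep => y; apply: functional_extensionality_dep => h.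
exact: fg.
Qed.
End Rank.

Section RankProps.
Lemma rank_spec (U : eqType) (RU : rel U) (woU : well_order RU)
   (RV : rel (U -> Prop)) (woV : well_order RV) (S : U -> Prop) x :
  let r := rank (wo_wf woU) RV S in
  let P := fun v => ~ exists y, lt_of RU y x /\ S y /\ v = r y in
  P (r x) /\ forall v, P v -> RV (r x) v.
Proof.
move=> r P; rewrite /r rank_eq -/r; apply: leastP => //.
apply: NNPP => H.
pose dg := fun u => ~ (lt_of RU u x /\ S u /\ r u u).
have : ~ P dg by move=> Pd; apply: H; exists dg.
move=> /NNPP [y [ly [Sy e]]].
have hry : r y = dg := esym e.
have h1 : dg y -> ~ r y y by move=> d ry; apply: d; split=> //; split.
have h2 : ~ r y y -> dg y by move=> nr [_ [_ ry]].
rewrite hry in h1 h2.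
have nd : ~ dg y by move=> d; exact: (h1 d d).
exact: nd (h2 nd).
Qed.
End RankProps.

Section RankProps2.
Lemma rank_lt (U : eqType) (RU : rel U) (woU : well_order RU)
   (RV : rel (U -> Prop)) (woV : well_order RV) (S : U -> Prop) s t :
  let r := rank (wo_wf woU) RV S in
  S t -> lt_of RU t s -> RV (r t) (r s) /\ r t <> r s.
Proof.
move=> r St lts.
have [Ps _] := rank_spec woU woV S s.
have [_ mint] := rank_spec woU woV S t.
split.
  apply: mint => -[y [lyt [Sy e]]]; apply: Ps; exists y; split=> //.
  exact: lt_trans lyt lts.
by move=> e; apply: Ps; exists t.
Qed.

Lemma rank_inj (U : eqType) (RU : rel U) (woU : well_order RU)
   (RV : rel (U -> Prop)) (woV : well_order RV) (S : U -> Prop) s t :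
  let r := rank (wo_wf woU) RV S in
  S s -> S t -> r s = r t -> s = t.
Proof.
move=> r Ss St e; apply: NNPP => nst.
case: (wo_total woU s t) => R.
  by have [_ /(_ e)] := rank_lt woU woV (s := t) Ss (conj nst R).
by have [_ /(_ (esym e))] := rank_lt woU woV (s := s) St (conj (fun e' => nst (esym e')) R).
Qed.

Lemma rank_down (U : eqType) (RU : rel U) (woU : well_order RU)
   (RV : rel (U -> Prop)) (woV : well_order RV) (S : U -> Prop) s v :
  let r := rank (wo_wf woU) RV S in
  S s -> RV v (r s) -> exists t, S t /\ v = r t.
Proof.
move=> r Ss Rv.
have [Ps mins] := rank_spec woU woV S s.
case: (classic (exists y, lt_of RU y s /\ S y /\ v = r y)) => [[y [_ [Sy e]]]|nP].
  by exists y.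
exists s; split=> //; exact: (wo_anti woV Rv (mins _ nP)).
Qed.
End RankProps2.

Lemma card_min (U : Type) (C : (U -> Prop) -> Prop) :
  (exists X, C X) -> exists X, C X /\ forall Y, C Y -> cle X Y.
Proof.
elim/Peq : U C => U C exC.
have [RU woU] := well_ordering_principle U.
have [RV woV] := well_ordering_principle (U -> Prop).
pose r := rank (wo_wf woU) RV.
pose D X := fun v => exists x, X x /\ v = r X x.
suff [X [CX sub]] : exists X, C X /\ forall Y, C Y -> forall v, D X v -> D Y v.
  exists X; split=> // Y CY.
  have hc : forall x : {x | X x}, {y | Y y /\ r Y y = r X (sval x)}.
    move=> [x Xx]; apply: constructive_indefinite_description.
    have [y [Yy e]] := sub Y CY (r X x) (ex_intro _ x (conj Xx erefl)).
    by exists y; split.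
  exists (fun x => exist _ (sval (hc x)) (proj1 (svalP (hc x)))).
  move=> [x1 X1] [x2 X2] /(congr1 sval) /= e.
  have := proj2 (svalP (hc (exist _ x1 X1))); have := proj2 (svalP (hc (exist _ x2 X2))).
  rewrite e /= => -> h.
  have ex : x1 = x2 := @rank_inj _ _ woU _ woV _ _ _ X1 X2 (esym h).
  subst x2; congr exist; exact: Prop_irrelevance.
case: (classic (exists v X, C X /\ ~ D X v)) => [exA|nA]; last first.
  case: exC => X CX; exists X; split=> // Y CY v _.
  by apply: NNPP => nd; apply: nA; exists v, Y.
have [v0 [[X0 [CX0 nD0]] minv]] := wo_min woV exA.
exists X0; split=> // Y CY w Dw; apply: NNPP => nDw.
have Rv := minv w (ex_intro _ Y (conj CY nDw)).
apply: nD0; case: Dw => x [Xx ->] in Rv *.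
have [t [Xt e]] := @rank_down _ _ woU _ woV _ _ _ Xx Rv.
by exists t.
Qed.

Lemma inj_surj_bij (X Y : Type) (h : X -> Y) :
  injective h -> (forall y, exists x, h x = y) -> bijective h.
Proof.
move=> hi hs.
pose k y := proj1_sig (constructive_indefinite_description _ (hs y)).
exists k.
  by move=> x; apply: hi; rewrite /k; case: constructive_indefinite_description.
by move=> y; rewrite /k; case: constructive_indefinite_description.
Qed.

Lemma csb (X Y : Type) (f : X -> Y) (g : Y -> X) :
  injective f -> injective g -> exists h : X -> Y, bijective h.
Proof.
move=> fi gi.
pose A x := exists n x0, (~ exists y, g y = x0) /\ x = iter n (g \o f) x0.
pose ginv x := epsilon (inhabits (f x)) (fun y => g y = x).
have ginvP : forall x, ~ A x -> g (ginv x) = x.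
  move=> x nA; rewrite /ginv; apply: (epsilon_spec (inhabits (f x)) (fun y => g y = x)).
  apply: NNPP => ne; apply: nA; exists 0, x; split=> //.
have Agf : forall x, A x -> A (g (f x)).
  by move=> x [n [x0 [nx0 ->]]]; exists n.+1, x0; split.
pose h x := if pselect (A x) then f x else ginv x.
exists h; apply: inj_surj_bij.
  move=> x1 x2; rewrite /h.
  case: (pselect (A x1)) => a1; case: (pselect (A x2)) => a2.
  - by move=> /= /fi.
  - move=> /= e; exfalso; have := Agf _ a1; rewrite e ginvP //.
  - move=> /= e; exfalso; have := Agf _ a2; rewrite -e ginvP //.
  - by move=> /= e; rewrite -(ginvP _ a1) -(ginvP _ a2) e.
move=> y; case: (pselect (A (g y))) => a.
  have [[|n] [x0 [nx0 e]]] := a.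
    by exfalso; apply: nx0; exists y.
  move: e; rewrite iterS /= => /gi e.
  exists (iter n (g \o f) x0); rewrite /h.
  destruct (pselect (A (iter n (g \o f) x0))) as [ax|na]; first by rewrite /= e.
  by exfalso; apply: na; exists n, x0.
exists (g y); rewrite /h; destruct (pselect (A (g y))) as [ax|na]; first by [].
by apply: gi; rewrite ginvP.
Qed.

Lemma cle_antisym (U : Type) (X Y : U -> Prop) :
  cle X Y -> cle Y X -> exists h : {x | X x} -> {y | Y y}, bijective h.
Proof. by move=> [f fi] [g gi]; exact: csb fi gi. Qed.

Lemma bij_cle (U : Type) (X Y : U -> Prop) (h : {x | X x} -> {y | Y y}) :
  bijective h -> cle X Y /\ cle Y X.
Proof.
move=> [k hk kh]; split; [exists h | exists k]; exact: can_inj.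
Qed.

End CardPart.


Lemma nonatomic_bad (d : Order.disp_t) (T : porderType d) (P : T -> Prop) :
  ~ atomic P -> bad_family P (open_dense_in P).
Proof.
move=> na; split=> // dn; apply: na.
exists (bigcap_in P (open_dense_in P)); split; last first.
  by move=> p Pp; have [q Iq qp] := dn p Pp; exists q.
move=> x [Px Ix]; split=> // y Py yx; apply: NNPP => nyx.
pose D z := P z /\ ~ x <= z.
have : D x.
  apply: Ix; split; first by move=> z [].
    by move=> p q [Pp npx] Pq qp; split=> // xq; apply: npx; exact: le_trans xq qp.
  move=> p Pp; case: (boolP (x <= p)) => xp.
    exists y; last exact: le_trans yx xp.
    by split=> // xy; apply: nyx; apply: le_anti; rewrite yx xy.
  by exists p => //; split=> //; apply/negP.
by case=> _; apply.
Qed.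

Lemma min_exists (d : Order.disp_t) (T : porderType d) (P : T -> Prop) :
  ~ atomic P -> exists F, min_bad_family P F.
Proof.
move=> na; have [F [bF mF]] := card_min (ex_intro (bad_family P) _ (nonatomic_bad na)).
by exists F; split.
Qed.

Lemma sh_atomic (d : Order.disp_t) (T : porderType d) (P Q : T -> Prop) :
  same_height P Q -> (atomic P <-> atomic Q).
Proof. by case=> [[aP aQ]|[nP nQ _]]. Qed.

Lemma sh_card (d : Order.disp_t) (T : porderType d) (P Q : T -> Prop) F G :
  same_height P Q -> ~ atomic P -> min_bad_family P F -> min_bad_family Q G ->
  card_le F G /\ card_le G F.
Proof.
case=> [[aP _]|[nP nQ [F0 [G0 [mF0 mG0 [h hb]]]]]] na mF mG; first by [].
have [c1 c2] := bij_cle hb.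
split.
  apply: cle_trans (proj2 mF _ (proj1 mF0)) _; apply: cle_trans c1 _.
  exact: (proj2 mG0 _ (proj1 mG)).
apply: cle_trans (proj2 mG _ (proj1 mG0)) _; apply: cle_trans c2 _.
exact: (proj2 mF0 _ (proj1 mF)).
Qed.

Lemma sh_intro (d : Order.disp_t) (T : porderType d) (P Q : T -> Prop) :
  ~ atomic P -> ~ atomic Q ->
  (forall F G, min_bad_family P F -> min_bad_family Q G -> card_le F G /\ card_le G F) ->
  same_height P Q.
Proof.
move=> nP nQ H; right; split=> //.
have [F mF] := min_exists nP; have [G mG] := min_exists nQ.
exists F, G; split=> //; have [c1 c2] := H F G mF mG.
exact: cle_antisym c1 c2.
Qed.

Lemma sh_refl (d : Order.disp_t) (T : porderType d) (P : T -> Prop) : same_height P P.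
Proof.
case: (classic (atomic P)) => a; first by left.
apply: sh_intro => // F G mF mG; split; [exact: (proj2 mF _ (proj1 mG)) | exact: (proj2 mG _ (proj1 mF))].
Qed.

Lemma sh_sym (d : Order.disp_t) (T : porderType d) (P Q : T -> Prop) :
  same_height P Q -> same_height Q P.
Proof.
move=> s; case: (classic (atomic P)) => a.
  by left; split=> //; apply/(sh_atomic s).
have nQ : ~ atomic Q by move=> aQ; apply: a; apply/(sh_atomic s).
apply: sh_intro => // G F mG mF; have [c1 c2] := sh_card s a mF mG; by split.
Qed.

Lemma sh_trans (d : Order.disp_t) (T : porderType d) (P Q R : T -> Prop) :
  same_height P Q -> same_height Q R -> same_height P R.
Proof.
move=> s1 s2; case: (classic (atomic P)) => a.
  have aQ : atomic Q by apply/(sh_atomic s1).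
  by left; split=> //; apply/(sh_atomic s2).
have nQ : ~ atomic Q by move=> aQ; apply: a; apply/(sh_atomic s1).
have nR : ~ atomic R by move=> aR; apply: nQ; apply/(sh_atomic s2).
apply: sh_intro => // F H mF mH.
have [G mG] := min_exists nQ.
have [c1 c2] := sh_card s1 a mF mG; have [c3 c4] := sh_card s2 nQ mG mH.
split; [exact: cle_trans c1 c3 | exact: cle_trans c4 c2].
Qed.


Lemma meet_le_bot d (B : ctbDistrLatticeType d) (x y z : B) :
  x <= y -> y `&` z = \bot -> x `&` z = \bot.
Proof. move=> xy e; apply/eqP; rewrite -lex0 -e; exact: leI2 xy (lexx z). Qed.

Lemma dist_sup d (B : ctbDistrLatticeType d) (S : B -> Prop) s a u :
  is_sup S s -> (forall x, S x -> a `&` x <= u) -> a `&` s <= u.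
Proof.
move=> [ub lub] H.
have hs : s <= u `|` ~` a.
  apply: lub => x Sx.
  have e : x <= (x `&` a) `|` ~` a by rewrite joinIl joinxC meetx1 leUl.
  apply: le_trans e _; rewrite leUx leUr andbT meetC.
  exact: le_trans (H x Sx) (leUl _ _).
apply: le_trans (leI2 (lexx a) hs) _; rewrite meetUr meetxC joinx0; exact: leIr.
Qed.

Lemma sup_meet0 d (B : ctbDistrLatticeType d) (S : B -> Prop) s a :
  is_sup S s -> (forall x, S x -> a `&` x = \bot) -> a `&` s = \bot.
Proof.
move=> hs H; apply/eqP; rewrite -lex0; apply: dist_sup hs _ => x Sx.
by rewrite H.
Qed.

Lemma sup_meet_nz d (B : ctbDistrLatticeType d) (S : B -> Prop) s a :
  is_sup S s -> a <= s -> a != \bot -> exists x, S x /\ a `&` x != \bot.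
Proof.
move=> hs as_ na; apply: NNPP => nx; move/negP: na; apply.
have e : a `&` s = \bot.
  apply: (@sup_meet0 _ _ S s a hs) => x Sx; apply: NNPP => nz; apply: nx; exists x; split=> //.
  exact/eqP.
by move: e; rewrite (meet_idPl as_) => ->.
Qed.

Lemma sup_unique d (T : porderType d) (S : T -> Prop) s t :
  is_sup S s -> is_sup S t -> s = t.
Proof.
move=> [us ls] [ut lt]; apply: le_anti; rewrite (ls _ ut); exact: lt _ us.
Qed.

Definition atomB d (B : ctbDistrLatticeType d) (a : B) :=
  a != \bot /\ forall x, x != \bot -> x <= a -> x = a.

Lemma atomicN d (B : ctbDistrLatticeType d) (p : B) :
  atomic (nonzero_below p) <->
  (forall r, r != \bot -> r <= p -> exists a, atomB a /\ a <= r).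
Proof.
split.
  move=> [A [hA hd]] r nr rp; have [a Aa ar] := hd r (conj nr rp).
  have [[na ap] mina] := hA a Aa.
  exists a; split=> //; split=> // x nx xa; apply: mina => //; split=> //.
  exact: le_trans xa ap.
move=> H; exists (fun a => atomB a /\ a <= p); split.
  move=> a [[na ma] ap]; split=> // q [nq _] qa; exact: ma.
move=> r [nr rp]; have [a [aa ar]] := H r nr rp; exists a => //; split=> //.
exact: le_trans ar rp.
Qed.

Lemma atomic_down d (B : ctbDistrLatticeType d) (p q : B) :
  atomic (nonzero_below p) -> q <= p -> atomic (nonzero_below q).
Proof.
move=> /atomicN H qp; apply/atomicN => r nr rq; apply: H nr _.
exact: le_trans rq qp.
Qed.

Lemma downsetN d (B : ctbDistrLatticeType d) (b p : B) :
  p <= b -> downset_in (nonzero_below b) p = nonzero_below p.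
Proof.
move=> pb; apply: functional_extensionality => x; apply: propositional_extensionality.
split; first by move=> [[nx _] xp].
by move=> [nx xp]; split=> //; split=> //; exact: le_trans xp pb.
Qed.

Lemma img_cle (U : Type) (G : U -> Prop) (phi : U -> U) :
  cle (fun E => exists D, G D /\ E = phi D) G.
Proof.
pose ch (E : {E | exists D, G D /\ E = phi D}) :=
  constructive_indefinite_description _ (proj2_sig E).
exists (fun E => exist _ (proj1_sig (ch E)) (proj1 (proj2_sig (ch E)))).
move=> [E1 h1] [E2 h2] /(congr1 sval) /= e.
have e1 := proj2 (proj2_sig (ch (exist _ E1 h1))).
have e2 := proj2 (proj2_sig (ch (exist _ E2 h2))).
rewrite /= in e1 e2.
have eE : E1 = E2 by rewrite e1 e2 e.
subst E2; congr exist; exact: Prop_irrelevance.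
Qed.

Lemma bad_witness d (T : porderType d) (P : T -> Prop) F :
  bad_family P F -> exists r, P r /\ forall t, bigcap_in P F t -> ~ t <= r.
Proof.
move=> [_ nd]; apply: NNPP => H; apply: nd => r Pr.
apply: NNPP => nt; apply: H; exists r; split=> // t It tr; apply: nt; by exists t.
Qed.

Lemma transfer_up d (B : ctbDistrLatticeType d) (p q : B) G :
  q <= p -> bad_family (nonzero_below q) G ->
  exists G', bad_family (nonzero_below p) G' /\ cle G' G.
Proof.
move=> qp bG; have [r [[nr rq] wr]] := bad_witness bG.
pose ext (D : B -> Prop) := fun y => nonzero_below p y /\ (y `&` q = \bot \/ D y).
exists (fun E => exists D, G D /\ E = ext D); split; last exact: img_cle.
split.
  move=> E [D [GD ->]]; have [sD dD deD] := proj1 bG D GD; split.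
  - by move=> y [].
  - move=> y z [Np [e|Dy]] Nz zy; split=> //.
      by left; exact: meet_le_bot zy e.
    right; apply: (dD y z Dy _ zy); case: Nz => nz _; split=> //.
    by case: (sD _ Dy) => _ yq; exact: le_trans zy yq.
  - move=> y [ny yp]; case: (boolP (y `&` q == \bot)) => [/eqP e|ne].
      by exists y => //; split=> //; left.
    have [t Dt tle] := deD (y `&` q) (conj ne (leIr _ _)).
    have [nt tq] := sD _ Dt.
    exists t; last exact: le_trans tle (leIl _ _).
    split; last by right.
    by split=> //; exact: le_trans tq qp.
move=> dn; have Npr : nonzero_below p r by split=> //; exact: le_trans rq qp.
have [t [Nt It] tr] := dn r Npr.
apply: (wr t) => //; split.
  by case: Nt => nt _; split=> //; exact: le_trans tr rq.
move=> D GD; have [[nt _] [e|Dt]] := It (ext D) (ex_intro _ D (conj GD erefl)) => //.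
by move: e; rewrite (meet_idPl (le_trans tr rq)) => e; rewrite e eqxx in nt.
Qed.

Lemma transfer_down d (B : ctbDistrLatticeType d) (p q r : B) F :
  bad_family (nonzero_below p) F -> nonzero_below p r ->
  (forall t, bigcap_in (nonzero_below p) F t -> ~ t <= r) ->
  q <= r -> q != \bot ->
  exists F', bad_family (nonzero_below q) F' /\ cle F' F.
Proof.
move=> bF [nr rp] wr qr nq; have qp := le_trans qr rp.
pose res (D : B -> Prop) := fun y => D y /\ y <= q.
exists (fun E => exists D, F D /\ E = res D); split; last exact: img_cle.
split.
  move=> E [D [FD ->]]; have [sD dD deD] := proj1 bF D FD; split.
  - by move=> y [Dy yq]; split=> //; case: (sD _ Dy).
  - move=> y z [Dy yq] [nz zq] zy; split=> //; apply: dD Dy _ zy.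
    by split=> //; exact: le_trans zq qp.
  - move=> y [ny yq]; have [t Dt ty] := deD y (conj ny (le_trans yq qp)).
    by exists t => //; split=> //; exact: le_trans ty yq.
move=> dn; have [t [[nt tq] It] tq'] := dn q (conj nq (lexx q)).
apply: (wr t); last exact: le_trans tq qr.
split; first by split=> //; exact: le_trans tq qp.
move=> D FD; exact: proj1 (It (res D) (ex_intro _ D (conj FD erefl))).
Qed.


Definition SHN d (B : ctbDistrLatticeType d) (a b : B) :=
  same_height (nonzero_below a) (nonzero_below b).

Lemma mono_card d (B : ctbDistrLatticeType d) (p q : B) F G :
  q <= p -> min_bad_family (nonzero_below p) F ->
  min_bad_family (nonzero_below q) G -> card_le F G.
Proof.
move=> qp mF mG; have [G' [bG' c]] := transfer_up qp (proj1 mG).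
exact: cle_trans (proj2 mF _ bG') c.
Qed.

Lemma hom_exists d (B : ctbDistrLatticeType d) (p : B) : p != \bot ->
  exists q, [/\ q != \bot, q <= p & homogeneous_in_height (nonzero_below q)].
Proof.
move=> np.
case: (classic (exists a, atomB a /\ a <= p)) => [[a [[na ma] ap]]|noat].
  exists a; split=> // x [nx xa]; rewrite downsetN //.
  rewrite (ma x nx xa); exact: sh_refl.
have nat : forall r, r != \bot -> r <= p -> ~ atomic (nonzero_below r).
  move=> r nr rp /atomicN H; have [a [aa ar]] := H r nr (lexx r).
  by apply: noat; exists a; split=> //; exact: le_trans ar rp.
have [F mF] := min_exists (nat p np (lexx p)).
have [r [[nr rp] wr]] := bad_witness (proj1 mF).
exists r; split=> // x [nx xr]; rewrite downsetN //.
have xp := le_trans xr rp.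
apply: sh_intro; [exact: nat | exact: nat | move=> Fx Fr mFx mFr; split].
- have [F' [bF' c]] := transfer_down (proj1 mF) (conj nr rp) wr xr nx.
  apply: cle_trans (proj2 mFx _ bF') _; apply: cle_trans c _.
  exact: mono_card rp mF mFr.
- exact: mono_card xr mFr mFx.
Qed.

Lemma hom_below d (B : ctbDistrLatticeType d) (x y : B) :
  homogeneous_in_height (nonzero_below y) -> x <= y -> x != \bot -> SHN x y.
Proof. by move=> h xy nx; have := h x (conj nx xy); rewrite downsetN. Qed.

Definition Cls d (B : ctbDistrLatticeType d) (x : B) :=
  fun y => (y != \bot /\ homogeneous_in_height (nonzero_below y)) /\ SHN y x.

Lemma cls_below d (B : ctbDistrLatticeType d) (x b r : B) :
  is_sup (Cls x) b -> r <= b -> r != \bot ->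
  exists r', [/\ r' != \bot, r' <= r & SHN r' x].
Proof.
move=> hs rb nr; have [y [[[ny hy] shy] nry]] := sup_meet_nz hs rb nr.
exists (r `&` y); split=> //; first exact: leIl.
exact: sh_trans (hom_below hy (leIr _ _) nry) shy.
Qed.

Lemma cls_all d (B : ctbDistrLatticeType d) (x b r : B) :
  is_sup (Cls x) b -> r != \bot -> r <= b -> SHN r x.
Proof.
move=> hs nr rb.
case: (classic (atomic (nonzero_below x))) => ax.
  left; split=> //; apply/atomicN => s ns sr.
  have [s' [ns' s's sh]] := cls_below hs (le_trans sr rb) ns.
  have : atomic (nonzero_below s') by apply/(sh_atomic sh).
  move/atomicN => H; have [a [aa as']] := H s' ns' (lexx _).
  by exists a; split=> //; exact: le_trans as' s's.
have [r' [nr' r'r sh]] := cls_below hs rb nr.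
have nr'at : ~ atomic (nonzero_below r') by move=> a; apply: ax; apply/(sh_atomic sh).
have nrat : ~ atomic (nonzero_below r) by move=> a; apply: nr'at; exact: atomic_down a r'r.
apply: sh_intro => // Fr Fx mFr mFx; split.
- have [F' mF'] := min_exists nr'at.
  apply: cle_trans (mono_card r'r mFr mF') _.
  exact: proj1 (sh_card sh nr'at mF' mFx).
- have [s [[ns sr] ws]] := bad_witness (proj1 mFr).
  have [s' [ns' s's sh']] := cls_below hs (le_trans sr rb) ns.
  have ns'at : ~ atomic (nonzero_below s') by move=> a; apply: ax; apply/(sh_atomic sh').
  have [F'' [bF'' c]] := transfer_down (proj1 mFr) (conj ns sr) ws s's ns'.
  have [Fs mFs] := min_exists ns'at.
  apply: cle_trans (proj2 (sh_card sh' ns'at mFs mFx)) _.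
  exact: cle_trans (proj2 mFs _ bF'') c.
Qed.

Lemma cls_eq d (B : ctbDistrLatticeType d) (x x' : B) : SHN x x' -> Cls x = Cls x'.
Proof.
move=> s; apply: functional_extensionality => y; apply: propositional_extensionality.
split; move=> [h s1]; split=> //; first exact: sh_trans s1 s.
exact: sh_trans s1 (sh_sym s).
Qed.

Lemma sig_eq (A : Type) (P : A -> Prop) (x y : {a | P a}) : sval x = sval y -> x = y.
Proof. case: x => x px; case: y => y py /= e; subst y; congr exist; exact: Prop_irrelevance. Qed.

Lemma meet_le_bot' d (B : ctbDistrLatticeType d) (x y z : B) :
  x `&` y = \bot -> z <= y -> x `&` z = \bot.
Proof. by move=> e zy; rewrite meetC; apply: meet_le_bot zy _; rewrite meetC. Qed.

Lemma sup_top d (B : ctbDistrLatticeType d) (I : B -> Prop) x u :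
  is_sup I \top -> (forall i, I i -> x `&` i <= u) -> x <= u.
Proof.
move=> hs H; have := dist_sup hs H; by rewrite meetx1.
Qed.

Lemma prod_iso d (B : ctbDistrLatticeType d) (I : B -> Prop) :
  complete_BA B -> (forall a b, I a -> I b -> a <> b -> a `&` b = \bot) ->
  is_sup I \top -> product_iso I.
Proof.
move=> cB dis top.
pose phi (x : B) := fun i : {b : B | I b} =>
  exist (fun z => is_true (z <= sval i)) (x `&` sval i) (leIr (sval i) x).
have ordP : forall x y : B, x <= y <-> forall i, sval (phi x i) <= sval (phi y i).
  move=> x y; split.
    by move=> xy i /=; exact: leI2 xy (lexx _).
  move=> H; apply: (sup_top top) => i Ii.
  exact: le_trans (H (exist _ i Ii)) (leIl _ _).
exists phi; split=> //.
pose Sg (g : forall i : {b : B | I b}, {x : B | x <= sval i}) :=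
  fun z => exists i, z = sval (g i).
pose psi g := epsilon (inhabits \bot) (is_sup (Sg g)).
have psiP : forall g, is_sup (Sg g) (psi g).
  move=> g; exact: (epsilon_spec (inhabits \bot) (is_sup (Sg g)) (cB (Sg g))).
exists psi.
  move=> x; apply: sup_unique (psiP (phi x)) _; split.
    by move=> z [i ->] /=; exact: leIl.
  move=> u ub; apply: (sup_top top) => i Ii.
  exact: ub (ex_intro _ (exist _ i Ii) erefl).
move=> g; apply: functional_extensionality_dep => i; apply: sig_eq => /=.
apply: le_anti; apply/andP; split.
  rewrite meetC; apply: (dist_sup (psiP g)) => z [j ->].
  case: (classic (j = i)) => [->|nji]; first exact: leIr.
  have e : sval i `&` sval j = \bot.
    apply: dis; [exact: svalP | exact: svalP | move=> e; apply: nji; exact: sig_eq].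
  have : sval i `&` sval (g j) = \bot := meet_le_bot' e (svalP (g j)).
  by move=> ->; exact: le0x.
rewrite lexI (svalP (g i)) andbT.
by case: (psiP g) => ub _; apply: ub; exists i.
Qed.

Theorem mainTheorem1 (d : Order.disp_t) (B : ctbDistrLatticeType d) :
  complete_BA B ->
  exists I : B -> Prop,
    [/\ partition_of_unity I,
        product_iso I,
        (forall b, I b -> homogeneous_in_height (nonzero_below b))
      & (forall a b, I a -> I b -> a <> b ->
           ~ same_height (nonzero_below a) (nonzero_below b))].
Proof.
move=> cB.
pose I := fun b : B => exists x, (x != \bot /\ homogeneous_in_height (nonzero_below x))
                                /\ is_sup (Cls x) b.
have Ixx : forall x : B, x != \bot -> homogeneous_in_height (nonzero_below x) -> Cls x x.
  by move=> x nx hx; split=> //; exact: sh_refl.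
have Inz : forall b, I b -> b != \bot.
  move=> b [x [[nx hx] [ub _]]]; have xb := ub x (Ixx x nx hx).
  apply/negP => /eqP e; move: nx; by rewrite -lex0 -e xb.
have Ish : forall b, I b -> forall r, r != \bot -> r <= b -> exists x, 
    (x != \bot /\ homogeneous_in_height (nonzero_below x)) /\ is_sup (Cls x) b /\ SHN r x.
  move=> b [x [hx hs]] r nr rb; exists x; split=> //; split=> //; exact: cls_all hs nr rb.
have Ieq : forall a b, I a -> I b -> SHN a b -> a = b.
  move=> a b Ia Ib sab.
  have [x [_ [hsa sx]]] := Ish a Ia a (Inz a Ia) (lexx a).
  have [y [_ [hsb sy]]] := Ish b Ib b (Inz b Ib) (lexx b).
  have e : Cls x = Cls y by apply: cls_eq; exact: sh_trans (sh_trans (sh_sym sx) sab) sy.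
  by rewrite e in hsa; exact: sup_unique hsa hsb.
have Itop : is_sup I \top.
  split; first by move=> x _; exact: lex1.
  move=> u ub; case: (boolP (~` u == \bot)) => [/eqP e|ne].
    by rewrite -(complK u) e compl0.
  have [q [nq qu hq]] := hom_exists ne.
  have [b hb] := cB (Cls q).
  have Ib : I b by exists q; split.
  have qb : q <= b by case: hb => ubb _; exact: ubb q (Ixx q nq hq).
  have qu' : q <= u := le_trans qb (ub b Ib).
  exfalso; move: nq; apply/negP; rewrite negbK -lex0 -(meetxC u) lexI qu'; exact: qu.
have Idis : forall a b, I a -> I b -> a <> b -> a `&` b = \bot.
  move=> a b Ia Ib ab; apply: NNPP => ne.
  have nab : a `&` b != \bot by apply/negP => /eqP.
  have [x [_ hsa]] := Ia; have [y [_ hsb]] := Ib.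
  have sx := cls_all hsa nab (leIl _ _).
  have sy := cls_all hsb nab (leIr _ _).
  have sa := cls_all hsa (Inz a Ia) (lexx a).
  have sb := cls_all hsb (Inz b Ib) (lexx b).
  apply: ab; apply: Ieq => //.
  exact: sh_trans (sh_trans sa (sh_sym sx)) (sh_trans sy (sh_sym sb)).
exists I; split.
- by split.
- exact: prod_iso cB Idis Itop.
- move=> b Ib r [nr rb]; rewrite downsetN //.
  have [x [_ hsb]] := Ib.
  exact: sh_trans (cls_all hsb nr rb) (sh_sym (cls_all hsb (Inz b Ib) (lexx b))).
- by move=> a b Ia Ib ab sab; apply: ab; exact: Ieq.
Qed.
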